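(* Let $A\in\mathbb{C}^{m\times n}$ and $X\in\mathbb{C}^{n\times m}$. Then the following are equivalent: (1) $A^{\mathfrak{m}}$ exists and $X=A^{\mathfrak{m}}$; (2) $XAa=a$ for all $a\in\mathcal{R}(A^{\sim})$, and $Xb=0$ for all $b\in\mathcal{N}(A^{\sim})$; (3) $AX=P_{\mathcal{R}(A),\mathcal{N}(A^{\sim})}$, $XA=P_{\mathcal{R}(X),\mathcal{N}(A)}$, and $\mathcal{R}(X)\subseteq\mathcal{R}(A^{\sim})$.
   Context: For a positive integer $k$, the Minkowski metric matrix of order $k$ is $G_k=\mathrm{diag}(1,-I_{k-1})$ (with $G_1=(1)$). For $A\in\mathbb{C}^{m\times n}$, the Minkowski adjoint is $A^{\sim}=G_nA^*G_m$, where $A^*$ is the conjugate transpose. The Minkowski inverse of $A$, denoted $A^{\mathfrak{m}}$, is a matrix $X\in\mathbb{C}^{n\times m}$ with $AXA=A$, $XAX=X$, $(AX)^{\sim}=AX$, $(XA)^{\sim}=XA$ (unique if it exists). $\mathcal{R}(\cdot)$, $\mathcal{N}(\cdot)$ denote range and null space. For subspaces $\mathcal{S},\mathcal{T}$ of $\mathbb{C}^k$ with $\mathcal{S}\oplus\mathcal{T}=\mathbb{C}^k$, $P_{\mathcal{S},\mathcal{T}}$ denotes the projector onto $\mathcal{S}$ along $\mathcal{T}$ (statement (3) includes that the relevant direct sums hold). *)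

(* Defs.v *)
From HB Require Import structures.
From mathcomp Require Import all_boot all_order all_algebra.
From mathcomp Require Import complex.
From mathcomp Require Import reals.
Set Implicit Arguments. Unset Strict Implicit. Unset Printing Implicit Defensive.
Import Order.TTheory GRing.Theory Num.Theory.
Local Open Scope ring_scope.

Definition minkG {F : pzRingType} (k : nat) : 'M[F]_k :=
  diag_mx (\row_(i < k) (if (i : nat) == 0%N then 1 else -1)).

Definition conjT {C : numClosedFieldType} {m n : nat} (A : 'M[C]_(m, n)) : 'M[C]_(n, m) :=
  (map_mx Num.conj A)^T.

Definition madj {C : numClosedFieldType} {m n : nat} (A : 'M[C]_(m, n)) : 'M[C]_(n, m) :=
  minkG n *m conjT A *m minkG m.

Definition is_minv {C : numClosedFieldType} {m n : nat}
  (A : 'M[C]_(m, n)) (X : 'M[C]_(n, m)) : Prop :=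
  [/\ A *m X *m A = A, X *m A *m X = X,
      madj (A *m X) = A *m X & madj (X *m A) = X *m A].

Definition inRange {C : pzRingType} {m n : nat} (A : 'M[C]_(m, n)) (v : 'cV[C]_m) : Prop :=
  exists y : 'cV[C]_n, v = A *m y.
Definition inNull {C : pzRingType} {m n : nat} (A : 'M[C]_(m, n)) (v : 'cV[C]_n) : Prop :=
  A *m v = 0.

Definition dirsum {C : pzRingType} {k : nat} (S T : 'cV[C]_k -> Prop) : Prop :=
  (forall x : 'cV[C]_k, exists s t, [/\ S s, T t & x = s + t]) /\
  (forall x : 'cV[C]_k, S x -> T x -> x = 0).

Definition is_proj {C : pzRingType} {k : nat} (P : 'M[C]_k) (S T : 'cV[C]_k -> Prop) : Prop :=
  [/\ dirsum S T,
      (forall x, S x -> P *m x = x) &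
      (forall x, T x -> P *m x = 0)].

(* Main.v *)
Require Import Defs.
From HB Require Import structures.
From mathcomp Require Import all_boot all_order all_algebra.
From mathcomp Require Import complex.
From mathcomp Require Import reals.
Import Order.TTheory GRing.Theory Num.Theory.
Local Open Scope ring_scope.
Set Implicit Arguments. Unset Strict Implicit.

Section Aux.
Variable C : numClosedFieldType.

Lemma minkGK k : minkG k *m minkG k = 1%:M :> 'M[C]_k.
Proof.
apply/matrixP => i j; rewrite /minkG mul_diag_mx !mxE.
case: (i == j); rewrite ?mulr0n ?mulr0 ?mulr1n //.
by case: ifP; rewrite ?mulr1 ?mulrNN ?mulr1.
Qed.

Lemma conjT_minkG k : conjT (minkG k) = minkG k :> 'M[C]_k.
Proof.
apply/matrixP => i j; rewrite /conjT /minkG !mxE.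
have [->|nij] := eqVneq i j.
  by rewrite !mulr1n; case: ifP => _; rewrite ?rmorph1 ?rmorphN1.
by rewrite !mulr0n rmorph0.
Qed.

Lemma conjT_mul m n p (A : 'M[C]_(m, n)) (B : 'M[C]_(n, p)) :
  conjT (A *m B) = conjT B *m conjT A.
Proof. by rewrite /conjT map_mxM trmx_mul. Qed.

Lemma conjTK m n (A : 'M[C]_(m, n)) : conjT (conjT A) = A.
Proof. by apply/matrixP => i j; rewrite /conjT !mxE conjCK. Qed.

Lemma conjTB m n (A B : 'M[C]_(m, n)) : conjT (A - B) = conjT A - conjT B.
Proof. by rewrite /conjT map_mxB linearB. Qed.

Lemma madj_mul m n p (A : 'M[C]_(m, n)) (B : 'M[C]_(n, p)) :
  madj (A *m B) = madj B *m madj A.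
Proof.
rewrite /madj conjT_mul !mulmxA -[minkG p *m conjT B *m minkG n *m minkG n]mulmxA.
by rewrite minkGK mulmx1.
Qed.

Lemma madjK m n (A : 'M[C]_(m, n)) : madj (madj A) = A.
Proof.
rewrite /madj !conjT_mul conjTK !conjT_minkG !mulmxA minkGK mul1mx.
by rewrite -mulmxA minkGK mulmx1.
Qed.

Lemma madjB m n (A B : 'M[C]_(m, n)) : madj (A - B) = madj A - madj B.
Proof. by rewrite /madj conjTB mulmxBr mulmxBl. Qed.

Lemma madj0 m n : madj (0 : 'M[C]_(m, n)) = 0.
Proof. by rewrite -(subrr (0 : 'M[C]_(m,n))) madjB subrr. Qed.

Lemma madj1 n : madj (1%:M : 'M[C]_n) = 1%:M.
Proof. by rewrite /madj /conjT map_mx1 trmx1 mulmx1 minkGK. Qed.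


Lemma mx_ext m n (M N : 'M[C]_(m, n)) :
  (forall v : 'cV[C]_n, M *m v = N *m v) -> M = N.
Proof.
move=> H; apply/matrixP => i j.
have := congr1 (fun D : 'cV[C]_m => D i ord0) (H (delta_mx j ord0)).
by rewrite -!colE !mxE.
Qed.

Lemma rank_madj m n (A : 'M[C]_(m, n)) : (\rank (madj A) <= \rank A)%N.
Proof.
rewrite /madj; apply: leq_trans (mxrankM_maxl _ _) _.
apply: leq_trans (mxrankM_maxr _ _) _.
by rewrite /conjT mxrank_tr mxrank_map.
Qed.

Lemma null_sub m n p (X : 'M[C]_(n, m)) (B : 'M[C]_(p, m)) :
  (forall b : 'cV[C]_m, B *m b = 0 -> X *m b = 0) -> exists Z, X = Z *m B.
Proof.
move=> H; apply/submxP; rewrite submxE; apply/eqP/mx_ext => v.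
by rewrite mul0mx -mulmxA H // mulmxA mulmx_coker mul0mx.
Qed.

Lemma key m n (A : 'M[C]_(m, n)) X Z :
  X *m A *m madj A = madj A -> X = Z *m madj A -> is_minv A X.
Proof.
move=> Hi Hii.
have Hi' : A *m madj A *m madj X = A.
  by have := congr1 madj Hi; rewrite (madj_mul (X *m A)) (madj_mul X) madjK mulmxA.
have M1 : forall E : 'M[C]_n, E *m madj A *m A = 0 -> madj A *m A *m madj E = 0.
  move=> E h; have := congr1 madj h.
  by rewrite (madj_mul (E *m madj A) A) (madj_mul E (madj A)) madjK madj0 mulmxA.
have M2 : forall E : 'M[C]_n, A *m madj E = 0 -> E *m madj A = 0.
  by move=> E h; have := congr1 madj h; rewrite (madj_mul A (madj E)) madjK madj0.
have M3 : madj A *m A *m X = madj A -> madj X *m madj A *m A = A.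
  move=> h; have := congr1 madj h.
  by rewrite (madj_mul (madj A *m A) X) (madj_mul (madj A) A) madjK mulmxA.
rewrite /is_minv (madj_mul A X) (madj_mul X A).
move: M1 M2 M3 Hi Hii Hi'.
pose B := madj A; pose Xs := madj X.
rewrite -/B -/Xs.
clearbody B Xs => M1 M2 M3 Hi Hii Hi'.
have L : forall p (M : 'M[C]_(n, p)), B *m A *m M = 0 -> A *m M = 0.
  move=> p M HM.
  have h1 : X *m A *m M = 0 by rewrite Hii -!mulmxA (mulmxA B) HM mulmx0.
  have h2 : B *m Xs *m M = 0.
    by rewrite -Hi -!mulmxA (mulmxA A B) (mulmxA (A *m B)) Hi' mulmxA h1.
  by rewrite -Hi' -!mulmxA (mulmxA B Xs M) h2 mulmx0.
have AXA : A *m X *m A = A.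
  by rewrite -{2}Hi' !mulmxA -(mulmxA A X A) -(mulmxA A (X *m A) B) Hi Hi'.
pose E := B *m A *m Z - 1%:M.
have h3 : E *m B *m A = 0.
  by rewrite /E !mulmxBl mul1mx -(mulmxA (B *m A) Z B) -Hii -!mulmxA (mulmxA A X A) AXA subrr.
have h5 := M2 E (L _ _ (M1 E h3)).
have AAX : B *m A *m X = B.
  by move: h5; rewrite /E mulmxBl mul1mx Hii mulmxA => /eqP; rewrite subr_eq0 => /eqP.
have XAX : X *m A *m X = X.
  by rewrite {1}Hii -!mulmxA (mulmxA B A X) AAX -Hii.
have XAA := M3 AAX.
split => //.
- by rewrite -{1}AAX !mulmxA XAA.
- by rewrite -Hi' !mulmxA Hi.
Qed.


Lemma dir12 m n (A : 'M[C]_(m, n)) X : is_minv A X ->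
  (forall a : 'cV[C]_n, inRange (madj A) a -> X *m A *m a = a) /\
  (forall b : 'cV[C]_m, inNull (madj A) b -> X *m b = 0).
Proof.
case=> AXA XAX SAX SXA; split.
- move=> a [y ->].
  have XAB : X *m A *m madj A = madj A.
    by rewrite -SXA -madj_mul mulmxA AXA.
  by rewrite mulmxA XAB.
- move=> b Hb; rewrite /inNull in Hb.
  rewrite -XAX -(mulmxA (X *m A) X b) -(mulmxA X A (X *m b)) (mulmxA A X b).
  by rewrite -SAX (madj_mul A X) -(mulmxA (madj X) (madj A) b) Hb !mulmx0.
Qed.

Lemma dir13 m n (A : 'M[C]_(m, n)) X : is_minv A X ->
  [/\ is_proj (A *m X) (inRange A) (inNull (madj A)),
      is_proj (X *m A) (inRange X) (inNull A) &
      (forall v, inRange X v -> inRange (madj A) v)].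
Proof.
case=> AXA XAX SAX SXA.
have AAX : madj A *m A *m X = madj A.
  by rewrite -(mulmxA (madj A) A X) -SAX -(madj_mul (A *m X) A) AXA.
split.
- split; first split.
  + move=> x; exists (A *m X *m x), (x - A *m X *m x); split.
    * by exists (X *m x); rewrite mulmxA.
    * by rewrite /inNull mulmxBr !mulmxA AAX subrr.
    * by rewrite addrC subrK.
  + move=> x [y ->] Hb; rewrite /inNull in Hb.
    rewrite -AXA -(mulmxA (A *m X) A y) -SAX (madj_mul A X).
    by rewrite -(mulmxA (madj X)) Hb mulmx0.
  + by move=> x [y ->]; rewrite (mulmxA (A *m X) A y) AXA.
  + move=> x Ht; rewrite /inNull in Ht.
    by rewrite -SAX (madj_mul A X) -(mulmxA (madj X)) Ht mulmx0.
- split; first split.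
  + move=> x; exists (X *m A *m x), (x - X *m A *m x); split.
    * by exists (A *m x); rewrite mulmxA.
    * by rewrite /inNull mulmxBr !mulmxA AXA subrr.
    * by rewrite addrC subrK.
  + move=> x [y ->] Ha; rewrite /inNull in Ha.
    by rewrite -XAX -(mulmxA (X *m A) X y) -(mulmxA X A) Ha mulmx0.
  + by move=> x [y ->]; rewrite (mulmxA (X *m A) X y) XAX.
  + move=> x Ht; rewrite /inNull in Ht.
    by rewrite -(mulmxA X A x) Ht mulmx0.
- move=> v [y ->]; exists (madj X *m X *m y).
  by rewrite -{1}XAX -SXA (madj_mul X A) !mulmxA.
Qed.

Lemma dir21 m n (A : 'M[C]_(m, n)) X :
  (forall a : 'cV[C]_n, inRange (madj A) a -> X *m A *m a = a) /\
  (forall b : 'cV[C]_m, inNull (madj A) b -> X *m b = 0) -> is_minv A X.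
Proof.
case=> H1 H2.
have Hi : X *m A *m madj A = madj A.
  by apply: mx_ext => v; rewrite -(mulmxA (X *m A) (madj A) v) H1 //; exists v.
have [Z HZ] := null_sub H2.
exact: key Hi HZ.
Qed.

Lemma dir31 m n (A : 'M[C]_(m, n)) X :
  [/\ is_proj (A *m X) (inRange A) (inNull (madj A)),
      is_proj (X *m A) (inRange X) (inNull A) &
      (forall v, inRange X v -> inRange (madj A) v)] -> is_minv A X.
Proof.
case=> [[ds1 p1a p1b] [ds2 p2a p2b] Rx].
have AXA : A *m X *m A = A.
  by apply: mx_ext => v; rewrite -(mulmxA (A *m X) A v) p1a //; exists v.
have XAX : X *m A *m X = X.
  by apply: mx_ext => v; rewrite -(mulmxA (X *m A) X v) p2a //; exists v.
have Hn : forall b : 'cV[C]_m, inNull (madj A) b -> X *m b = 0.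
  move=> b Hb.
  rewrite -XAX -(mulmxA (X *m A) X b) -(mulmxA X A (X *m b)) (mulmxA A X b).
  by rewrite p1b // mulmx0.
have [Z HZ] := null_sub Hn.
have sub : (X^T <= (madj A)^T)%MS.
  apply/row_subP => i; rewrite -tr_col colE.
  have [y Hy] := Rx _ (ex_intro _ (delta_mx i 0) erefl).
  by apply/submxP; exists y^T; rewrite Hy trmx_mul.
have rk : (\rank (madj A)^T <= \rank X^T)%N.
  rewrite !mxrank_tr; apply: leq_trans (rank_madj A) _.
  rewrite -{1}AXA; apply: leq_trans (mxrankM_maxl _ _) _.
  exact: mxrankM_maxr.
have sub2 : ((madj A)^T <= X^T)%MS.
  by rewrite -(mxrank_leqif_sup sub).2 eqn_leq mxrankS.
have [D HD] := submxP sub2.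
have eB : madj A = X *m D^T.
  by rewrite -[madj A]trmxK HD trmx_mul trmxK.
have Hi : X *m A *m madj A = madj A by rewrite eB mulmxA XAX.
exact: key Hi HZ.
Qed.

End Aux.

Unset Implicit Arguments. Set Strict Implicit.
Theorem theorem5p6 (R : realType) (m n : nat) (Hm : (0 < m)%N) (Hn : (0 < n)%N)
  (A : 'M[R[i]]_(m, n)) (X : 'M[R[i]]_(n, m)) :
  let P1 := is_minv A X in
  let P2 := (forall a : 'cV[R[i]]_n, inRange (madj A) a -> X *m A *m a = a) /\
            (forall b : 'cV[R[i]]_m, inNull (madj A) b -> X *m b = 0) in
  let P3 := [/\ is_proj (A *m X) (inRange A) (inNull (madj A)),
               is_proj (X *m A) (inRange X) (inNull A) &
               (forall v, inRange X v -> inRange (madj A) v)] in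
  (P1 <-> P2) /\ (P1 <-> P3).
Proof.
move=> P1 P2 P3; subst P1 P2 P3.
split; split.
- exact: dir12.
- exact: dir21.
- exact: dir13.
- exact: dir31.
Qed.
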